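(* Let $D,N\in\mathbf{N}$. (a) A measure $\mu$ maximizes $E_\infty$ over $\mathcal{M}_N^{=}(\mathbf{S}^D)$ if and only if there exist an orthonormal basis $v_1,\dots,v_{D+1}$ of $\mathbf{R}^{D+1}$ and $x_1,\dots,x_N\in\mathbf{S}^D$ such that $\mu=\sum_{i=1}^N\delta_{x_i}$ and $x_i\sim v_j$ whenever $i\equiv j\pmod{D+1}$. (b) Let $V$ be a $D$-dimensional linear subspace of $\mathbf{R}^{D+1}$, let $p\in\mathbf{S}^D$ be such that $\mathbf{S}^D\cap V^\perp=\{p,-p\}$, and let $k\in\{0,1,\dots,N\}$ with $k\ge\frac{DN}{D+1}$. Then $\mu=\sum_{i=1}^N\delta_{x_i}$ maximizes $E_\infty$ over $\mathcal{M}^V_{N,k}(\mathbf{S}^D)$ if and only if $x_i\sim p$ for every $x_i\notin V$, and there exists an orthonormal basis $v_1,\dots,v_D$ of $V$ such that for every $j=1,\dots,D$, the number $|\{i: x_i\sim v_j\}|$ equals either $\lceil k/D\rceil$ or $\lfloor k/D\rfloor$.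
   Context: $\mathbf{S}^D=\{x\in\mathbf{R}^{D+1}:|x|=1\}$. For $x,y\in\mathbf{S}^D$, write $x\sim y$ if $x=y$ or $x=-y$. Define $\Lambda^\infty(x,y)=1$ if $x\cdot y=0$ and $0$ otherwise, and for a finite nonnegative Borel measure $\mu$ on $\mathbf{S}^D$, $E_\infty(\mu)=\frac12\iint\Lambda^\infty(x,y)\,d\mu(x)\,d\mu(y)$. $\delta_x$ is the Dirac mass at $x$. $\mathcal{M}_N^{=}(\mathbf{S}^D)$ is the set of measures $\sum_{i=1}^N\delta_{x_i}$ with $x_i\in\mathbf{S}^D$ (not necessarily distinct). For a $D$-dimensional subspace $V$ and $k\in\{0,\dots,N\}$, $\mathcal{M}^V_{N,k}(\mathbf{S}^D)=\{\mu\in\mathcal{M}_N^{=}(\mathbf{S}^D): \mu(V)=k\}$, where $\mu(V)$ means $\mu(V\cap\mathbf{S}^D)$. *)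

(* Defs.v *)
(* points of R^(D+1) are row vectors 'rV[R]_(D.+1), R : realType. *)
From HB Require Import structures.
From mathcomp Require Import all_boot all_order all_algebra.
From mathcomp Require Import boolp classical_sets reals.
Set Implicit Arguments. Unset Strict Implicit. Unset Printing Implicit Defensive.
Import Order.TTheory GRing.Theory Num.Theory.
Local Open Scope ring_scope.

Section Defs.
Variable R : realType.

Definition dot n (u v : 'rV[R]_n) : R := \sum_(i < n) u 0 i * v 0 i.

Definition antip n (x y : 'rV[R]_n) : Prop := x = y \/ x = - y.

Definition on_sphere n (x : 'rV[R]_n) : Prop := dot x x = 1.

Definition Lam n (x y : 'rV[R]_n) : R := if dot x y == 0 then 1 else 0.

(* The measure  sum_{i=1}^N delta_{x_i}  as a set function A |-> #{i | x_i in A}. *)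
Definition dirac_sum n N (x : 'I_N -> 'rV[R]_n) : set 'rV[R]_n -> nat :=
  fun A => #|[set i : 'I_N | `[< A (x i) >] ]|.

(* E_infty(sum_i delta_{x_i}) = 1/2 \iint Lambda^infty d mu d mu
   = 1/2 sum_{i,j} Lambda^infty(x_i, x_j). *)
Definition Einf n N (x : 'I_N -> 'rV[R]_n) : R :=
  2^-1 * \sum_(i < N) \sum_(j < N) Lam (x i) (x j).

(* M_N^=(S^D), described by the configurations of its atoms. *)
Definition in_MN n N (x : 'I_N -> 'rV[R]_n) : Prop := forall i, on_sphere (x i).

(* M^V_{N,k}(S^D): additionally mu(V) = #{i | x_i in V} = k; V is the
   row space of the square matrix V. *)
Definition in_MNkV n N (V : 'M[R]_n) (k : nat) (x : 'I_N -> 'rV[R]_n) : Prop :=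
  in_MN x /\ #|[set i : 'I_N | (x i <= V)%MS]| = k.

Definition maximizes n N (P : ('I_N -> 'rV[R]_n) -> Prop) (x : 'I_N -> 'rV[R]_n) :=
  P x /\ forall y, P y -> Einf y <= Einf x.

Definition onb_of n m (V : 'M[R]_n) (v : 'I_m -> 'rV[R]_n) : Prop :=
  (forall i j, dot (v i) (v j) = (i == j)%:R) /\ (\matrix_(j < m) v j == V)%MS.

Definition ceil_div (k D : nat) : nat := (k + D.-1) %/ D.

End Defs.

(* Main.v *)
Require Import Defs.
From HB Require Import structures.
From mathcomp Require Import all_boot all_order all_algebra.
From mathcomp Require Import boolp classical_sets reals.
From mathcomp Require Import zify ring lra.
From mathcomp Require Import fingroup perm.
Import Order.TTheory GRing.Theory Num.Theory.

Module M_A1.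
Set Implicit Arguments. Unset Strict Implicit. Unset Printing Implicit Defensive.
Local Open Scope ring_scope.

Section Basics.
Variable R : realType.
Variable m : nat.
Local Notation vec := 'rV[R]_m.

Lemma dotC (u v : vec) : dot u v = dot v u.
Proof. by apply: eq_bigr => i _; rewrite mulrC. Qed.
Lemma dotDl (u v w : vec) : dot (u + v) w = dot u w + dot v w.
Proof. by rewrite /dot -big_split; apply: eq_bigr => i _; rewrite mxE mulrDl. Qed.
Lemma dotZl a (u w : vec) : dot (a *: u) w = a * dot u w.
Proof. by rewrite /dot mulr_sumr; apply: eq_bigr => i _; rewrite mxE mulrA. Qed.
Lemma dotNl (u w : vec) : dot (- u) w = - dot u w.
Proof. by rewrite -scaleN1r dotZl mulN1r. Qed.
Lemma dotBl (u v w : vec) : dot (u - v) w = dot u w - dot v w.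
Proof. by rewrite dotDl dotNl. Qed.
Lemma dotDr (u v w : vec) : dot w (u + v) = dot w u + dot w v.
Proof. by rewrite dotC dotDl !(dotC w). Qed.
Lemma dotZr a (u w : vec) : dot w (a *: u) = a * dot w u.
Proof. by rewrite dotC dotZl dotC. Qed.
Lemma dotNr (u w : vec) : dot w (- u) = - dot w u.
Proof. by rewrite dotC dotNl dotC. Qed.
Lemma dotBr (u v w : vec) : dot w (u - v) = dot w u - dot w v.
Proof. by rewrite dotDr dotNr. Qed.
Lemma dot0l (w : vec) : dot 0 w = 0.
Proof. by rewrite /dot big1 // => i _; rewrite mxE mul0r. Qed.
Lemma dot0r (w : vec) : dot w 0 = 0.
Proof. by rewrite dotC dot0l. Qed.
Lemma dotxx_ge0 (u : vec) : 0 <= dot u u.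
Proof. by apply: sumr_ge0 => i _; rewrite -expr2 sqr_ge0. Qed.
Lemma dotxx_eq0 (u : vec) : (dot u u == 0) = (u == 0).
Proof.
apply/idP/idP; last by move/eqP->; rewrite dot0l.
rewrite /dot psumr_eq0; last by move=> i _; rewrite -expr2 sqr_ge0.
move/allP => H; apply/eqP/matrixP => i j; rewrite ord1 mxE.
by have := H j (mem_index_enum j); rewrite implyTb -expr2 sqrf_eq0 => /eqP.
Qed.
Lemma dotxx_neq0 (u : vec) : u != 0 -> dot u u != 0.
Proof. by rewrite dotxx_eq0. Qed.

End Basics.

End M_A1.
Import M_A1.

Module M_A2.
Set Implicit Arguments. Unset Strict Implicit. Unset Printing Implicit Defensive.
Local Open Scope ring_scope.

Section Graph.
Variable R : realType.
Variable m : nat.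
Local Notation vec := 'rV[R]_m.

Definition adjn (a b : vec) : nat := (dot a b == 0).
Lemma adjnC a b : adjn a b = adjn b a.
Proof. by rewrite /adjn dotC. Qed.
Lemma adjn_self a : a != 0 -> adjn a a = 0%N.
Proof. by move=> a0; rewrite /adjn dotxx_eq0 (negbTE a0). Qed.
Lemma adjn_le1 a b : (adjn a b <= 1)%N.
Proof. by rewrite /adjn; case: (_ == _). Qed.

Variable n : nat.
Definition deg (z : 'I_n -> vec) i := (\sum_j adjn (z i) (z j))%N.
Definition S (z : 'I_n -> vec) := (\sum_i deg z i)%N.
Definition upd (z : 'I_n -> vec) v t := fun i => if i == v then t else z i.
Definition Dv (z : 'I_n -> vec) v t := (\sum_(j | j != v) adjn t (z j))%N.

Lemma S_split z v : z v != 0 ->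
  S z = (2 * Dv z v (z v) + \sum_(i | i != v) \sum_(j | j != v) adjn (z i) (z j))%N.
Proof.
move=> zv0; rewrite /S (bigD1 v) //= /deg (bigD1 v) //= adjn_self // add0n.
have -> : (\sum_(i | i != v) \sum_j adjn (z i) (z j) =
   \sum_(i | i != v) adjn (z i) (z v) + \sum_(i | i != v) \sum_(j | j != v) adjn (z i) (z j))%N.
  by rewrite -big_split; apply: eq_bigr => i _; rewrite (bigD1 v).
rewrite /Dv addnA; congr (_ + _)%N.
rewrite mul2n -addnn; congr (_ + _)%N; by apply: eq_bigr => i _; rewrite adjnC.
Qed.

Lemma S_upd z v t : z v != 0 -> t != 0 ->
  (S (upd z v t) + 2 * Dv z v (z v) = S z + 2 * Dv z v t)%N.
Proof.
move=> zv0 t0; have ut : upd z v t v = t by rewrite /upd eqxx.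
rewrite (S_split zv0) (@S_split (upd z v t) v); last by rewrite ut.
have eqD : forall s, Dv (upd z v t) v s = Dv z v s.
  by move=> s; apply: eq_bigr => j /negbTE jv; rewrite /upd jv.
rewrite ut eqD.
have -> : (\sum_(i | i != v) \sum_(j | j != v) adjn (upd z v t i) (upd z v t j) =
   \sum_(i | i != v) \sum_(j | j != v) adjn (z i) (z j))%N.
  apply: eq_bigr => i /negbTE iv; apply: eq_bigr => j /negbTE jv.
  by rewrite /upd iv jv.
lia.
Qed.

Lemma deg_upd z v t i : i != v ->
  (deg (upd z v t) i + adjn (z i) (z v) = deg z i + adjn (z i) t)%N.
Proof.
move=> iv; rewrite /deg (bigD1 v) //= [in RHS](bigD1 v) //=.
have -> : upd z v t i = z i by rewrite /upd (negbTE iv).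
have -> : upd z v t v = t by rewrite /upd eqxx.
have -> : (\sum_(j | j != v) adjn (z i) (upd z v t j) = \sum_(j | j != v) adjn (z i) (z j))%N.
  by apply: eq_bigr => j /negbTE jv; rewrite /upd jv.
by rewrite addnAC [in RHS]addnAC [in RHS](addnC (adjn (z i) (z v))).
Qed.

Lemma deg_Dv z v : z v != 0 -> deg z v = Dv z v (z v).
Proof. by move=> zv0; rewrite /deg (bigD1 v) //= adjn_self. Qed.

Lemma Dv_other z v u : u != v -> (Dv z v (z u) + adjn (z u) (z v) = deg z u)%N.
Proof. by move=> uv; rewrite /deg (bigD1 v) //= addnC. Qed.

Definition good (W : 'M[R]_m) (z : 'I_n -> vec) :=
  forall i, z i != 0 /\ (z i <= W)%MS.
Definition ismax W z := good W z /\ forall z', good W z' -> (S z' <= S z)%N.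

Lemma good_upd W z v t : good W z -> t != 0 -> (t <= W)%MS -> good W (upd z v t).
Proof. by move=> gz t0 tW i; rewrite /upd; case: (i == v) => //; exact: gz. Qed.

Lemma Z1le W z u v : ismax W z -> u != v -> adjn (z u) (z v) = 0%N ->
  (deg z u <= deg z v)%N.
Proof.
move=> [gz mz] uv a0.
have gz' : good W (upd z v (z u)) by apply: good_upd => //; [exact: (proj1 (gz u))|exact: (proj2 (gz u))].
have := S_upd (proj1 (gz v)) (proj1 (gz u)).
rewrite -deg_Dv; last exact: (proj1 (gz v)).
have := Dv_other z uv; rewrite a0 addn0 => ->.
have := mz _ gz'; lia.
Qed.

Lemma Z1 W z u v : ismax W z -> u != v -> adjn (z u) (z v) = 0%N ->
  deg z u = deg z v.
Proof.
move=> mz uv a0; apply/eqP; rewrite eqn_leq (Z1le mz uv a0) /=.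
by apply: (Z1le mz); rewrite 1?eq_sym // adjnC.
Qed.

Lemma Z2 W z u v w : ismax W z -> adjn (z u) (z v) = 0%N -> adjn (z v) (z w) = 0%N ->
  adjn (z u) (z w) = 0%N.
Proof.
move=> mz a1 a2; have [gz maxz] := mz.
have [/eqP uv|uv] := boolP (u == v); first by rewrite uv.
have [/eqP vw|vw] := boolP (v == w); first by rewrite -vw.
have [/eqP uw|uw] := boolP (u == w); first by rewrite uw adjn_self //; exact: (proj1 (gz w)).
have d1 := Z1 mz uv a1; have d2 := Z1 mz vw a2.
case E : (adjn (z u) (z w)) => [//|k].
have E1 : adjn (z u) (z w) = 1%N by have := adjn_le1 (z u) (z w); rewrite E; lia.
pose z1 := upd z u (z v).
have g1 : good W z1 by apply: good_upd => //; [exact: (proj1 (gz v))|exact: (proj2 (gz v))].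
have s1 := S_upd (proj1 (gz u)) (proj1 (gz v)).
rewrite -deg_Dv in s1; last exact: (proj1 (gz u)).
have vu : v != u by rewrite eq_sym.
have := Dv_other z vu; rewrite adjnC a1 addn0 => e1; rewrite e1 in s1.
have z1w : z1 w = z w by rewrite /z1 /upd eq_sym (negbTE uw).
have z1v : z1 v = z v by rewrite /z1 /upd (negbTE vu).
pose z2 := upd z1 w (z v).
have g2 : good W z2 by apply: good_upd => //; [exact: (proj1 (gz v))|exact: (proj2 (gz v))].
have s2 := @S_upd z1 w (z v); rewrite z1w in s2.
have s2' := s2 (proj1 (gz w)) (proj1 (gz v)).
have hw : deg z1 w = Dv z1 w (z w) by rewrite -z1w; apply: deg_Dv; rewrite z1w; exact: (proj1 (gz w)).
have wu : w != u by rewrite eq_sym.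
have dw := @deg_upd z u (z v) w wu; rewrite -/z1 (adjnC (z w) (z u)) E1 (adjnC (z w) (z v)) a2 in dw.
have dv := @deg_upd z u (z v) v vu; rewrite -/z1 (adjnC (z v) (z u)) a1 adjn_self in dv; last exact: (proj1 (gz v)).
have ov := @Dv_other z1 w v vw; rewrite z1v z1w a2 addn0 in ov.
have := maxz _ g2; rewrite /z2.
rewrite -/z1 in s1. lia.
Qed.

End Graph.

End M_A2.
Import M_A2.

Module M_A3.
Set Implicit Arguments. Unset Strict Implicit. Unset Printing Implicit Defensive.
Local Open Scope ring_scope.

Section Z3.
Variable R : realType.
Variable m : nat.
Local Notation vec := 'rV[R]_m.

Lemma adjnE (a b : vec) : adjn a b = (dot a b == 0) :> nat.
Proof. by []. Qed.

Lemma adjn1 (a b : vec) : adjn a b = 1%N <-> dot a b = 0.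
Proof. by rewrite /adjn; case: eqP. Qed.
Lemma adjn0 (a b : vec) : adjn a b = 0%N <-> dot a b != 0.
Proof. by rewrite /adjn; case: eqP. Qed.

Variable n : nat.

Lemma Z3 W (z : 'I_n -> vec) u u' : ismax W z -> u != u' -> adjn (z u) (z u') = 0%N ->
  (z u' <= z u)%MS.
Proof.
move=> mz uu' a0; have [gz maxz] := mz.
case: (boolP ((z u' <= z u)%MS)) => // nsub; exfalso.
have zu0 := proj1 (gz u); have dzu := dotxx_neq0 zu0.
pose c := dot (z u') (z u) / dot (z u) (z u).
pose w := z u' - c *: z u.
have w0 : w != 0.
  apply/negP => /eqP w0; move/negP: nsub; apply; apply/sub_rVP; exists c.
  by apply/eqP; rewrite -subr_eq0 -/w w0.
have wW : (w <= W)%MS.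
  by rewrite /w -scaleNr; apply: addmx_sub; [exact: (proj2 (gz u'))|apply: scalemx_sub; exact: (proj2 (gz u))].
have dwu : dot w (z u) = 0.
  by rewrite /w dotBl dotZl /c divfK // subrr.
have key : forall j, adjn (z u') (z j) = 1%N -> adjn w (z j) = 1%N.
  move=> j /adjn1 dj; apply/adjn1.
  have : adjn (z u) (z j) = 1%N.
    case E : (adjn (z u) (z j)) (adjn_le1 (z u) (z j)) => [|[|//]] // _.
    have := Z2 mz (etrans (adjnC _ _) a0) E.
    by move/adjn0; rewrite dj eqxx.
  by move/adjn1 => dj'; rewrite /w dotBl dotZl dj dj' mulr0 subrr.
have gz' : good W (upd z u' w) by apply: good_upd.
have su := S_upd (proj1 (gz u')) w0.
have := maxz _ gz'.
have u'u : u != u' := uu'.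
have eqD : forall t, Dv z u' t = (adjn t (z u) + \sum_(j | (j != u') && (j != u)) adjn t (z j))%N.
  by move=> t; rewrite /Dv (bigD1 u).
have le : (\sum_(j | (j != u') && (j != u)) adjn (z u') (z j) <=
           \sum_(j | (j != u') && (j != u)) adjn w (z j))%N.
  apply: leq_sum => j _.
  case E : (adjn (z u') (z j)) (adjn_le1 (z u') (z j)) => [|[|//]] // _.
  by rewrite (key j E).
move: su; rewrite !eqD adjnC a0 (proj2 (adjn1 _ _) dwu).
lia.
Qed.

Lemma max_pairwise W (z : 'I_n -> vec) : ismax W z ->
  forall i j, dot (z i) (z j) = 0 \/ (z j <= z i)%MS.
Proof.
move=> mz i j; have [/eqP ->|ij] := boolP (i == j); first by right.
case E : (adjn (z i) (z j)) (adjn_le1 (z i) (z j)) => [|[|//]] // _.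
  by right; apply: Z3 mz ij E.
by left; apply/adjn1.
Qed.

End Z3.

End M_A3.
Import M_A3.

Module M_A4.
Set Implicit Arguments. Unset Strict Implicit. Unset Printing Implicit Defensive.
Local Open Scope ring_scope.

Section ONB.
Variable R : realType.
Variable m : nat.
Local Notation vec := 'rV[R]_m.

Lemma mulmxT_dot (w u : vec) : (w *m u^T) 0 0 = dot w u.
Proof. by rewrite !mxE; apply: eq_bigr => i _; rewrite !mxE. Qed.

Lemma sub_ker_dot (w u : vec) : (w <= kermx u^T)%MS = (dot w u == 0).
Proof.
apply/sub_kermxP/eqP => [H|H]; first by rewrite -mulmxT_dot H mxE.
by apply/matrixP => i j; rewrite !ord1 mulmxT_dot H mxE.
Qed.

Lemma onb_eq d (W : 'M[R]_m) (v : 'I_d -> vec) :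
  (forall i j, dot (v i) (v j) = (i == j)%:R) -> (forall j, (v j <= W)%MS) ->
  \rank W = d -> onb_of W v.
Proof.
move=> orth vW rW; split => //.
pose M := \matrix_(j < d) v j.
have MW : (M <= W)%MS by apply/row_subP => j; rewrite rowK.
have MM : M *m M^T = 1%:M.
  apply/matrixP => i j; rewrite !mxE -orth; apply: eq_bigr => k _; rewrite !mxE.
  done.
have rM : \rank M = d.
  apply/eqP; rewrite eqn_leq; apply/andP; split.
    by apply: leq_trans (mxrankS MW) _; rewrite rW.
  by rewrite -{1}(mxrank1 R d) -MM mxrankM_maxl.
by rewrite -(mxrank_leqif_eq MW).2 rM rW.
Qed.

Lemma W_nonzero_row (W : 'M[R]_m) : \rank W != 0%N -> exists a : vec, a != 0 /\ (a <= W)%MS.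
Proof.
move=> rW; case: (pselect (exists i, row i W != 0)) => [[i Hi]|H].
  by exists (row i W); split => //; exact: row_sub.
exfalso; move/negP: rW; apply; rewrite mxrank_eq0; apply/eqP/row_matrixP => i.
rewrite row0; apply/eqP; apply/negPn/negP => Hi; apply: H; by exists i.
Qed.

Lemma onb_adapted d : forall (W : 'M[R]_m) (s : seq vec), \rank W = d ->
  (forall a, a \in s -> a != 0 /\ (a <= W)%MS) ->
  (forall a b, a \in s -> b \in s -> dot a b = 0 \/ (b <= a)%MS) ->
  exists v : 'I_d -> vec, onb_of W v /\ forall a, a \in s -> exists j, (a <= v j)%MS.
Proof.
elim: d => [|d IH] W s rW sW spw.
  have W0 : W = 0 by apply/eqP; rewrite -mxrank_eq0 rW.
  exists (fun _ => 0); split.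
    by apply: onb_eq => //; case.
  move=> a /sW [a0 aW]; exfalso; move: aW; rewrite W0 submx0; exact/negP.
have [a0 [a00 a0W a0s]] : exists a0 : vec, [/\ a0 != 0, (a0 <= W)%MS &
    forall a, a \in s -> dot a0 a = 0 \/ (a <= a0)%MS].
  case: s sW spw => [|a s'] sW spw.
    have [a [a0 aW]] : exists a : vec, a != 0 /\ (a <= W)%MS by apply: W_nonzero_row; rewrite rW.
    by exists a; split.
  have [a0 aW] := sW a (mem_head _ _).
  exists a; split => // b bs; exact: spw (mem_head _ _) bs.
have da0 : 0 < dot a0 a0 by rewrite lt_def dotxx_neq0 // dotxx_ge0.
pose r := Num.sqrt (dot a0 a0).
have r0 : 0 < r by rewrite sqrtr_gt0.
pose u := r^-1 *: a0.
have uu : dot u u = 1.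
  rewrite /u dotZl dotZr mulrA -expr2 exprVn sqr_sqrtr ?mulVf //.
  - by rewrite gt_eqF.
  - by rewrite ltW.
have uW : (u <= W)%MS by apply: scalemx_sub.
have a0u : (a0 <= u)%MS.
  by apply/sub_rVP; exists r; rewrite /u scalerA divff ?scale1r // gt_eqF.
have u0 : u != 0 by apply/negP => /eqP u0; move: uu; rewrite u0 dot0l => /eqP; rewrite eq_sym oner_eq0.
pose K := kermx u^T.
pose W' := (W :&: K)%MS.
have rK : \rank K = (m - 1)%N by rewrite /K mxrank_ker mxrank_tr rank_rV u0.
have uK : ~~ (u <= K)%MS by rewrite /K sub_ker_dot uu oner_eq0.
have rWK : \rank (W + K)%MS = m.
  have lt : (\rank K < \rank (W + K)%MS)%N.
    have : (K < W + K)%MS.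
      rewrite ltmxE addsmxSr /=; apply/negP => H; move/negP: uK; apply.
      by apply: submx_trans H; apply: submx_trans uW (addsmxSl _ _).
    by rewrite ltmxErank => /andP[].
  have := rank_leq_col (W + K)%MS; move: lt; rewrite rK; lia.
have rW' : \rank W' = d.
  have := mxrank_sum_cap W K; rewrite rWK rK rW.
  have : (\rank K < \rank (W + K)%MS)%N by rewrite rWK rK; have := rank_leq_col u; rewrite rank_rV u0; lia.
  rewrite rK rWK /W'; lia.
pose s' := [seq b <- s | dot u b == 0].
have s'W : forall a, a \in s' -> a != 0 /\ (a <= W')%MS.
  move=> a; rewrite mem_filter => /andP[/eqP ua as_]; have [a0' aW] := sW a as_.
  split => //; rewrite sub_capmx aW /= /K sub_ker_dot dotC ua //.
have s'pw : forall a b, a \in s' -> b \in s' -> dot a b = 0 \/ (b <= a)%MS.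
  by move=> a b; rewrite !mem_filter => /andP[_ ?] /andP[_ ?]; apply: spw.
have [v' [[orth' eqv'] ad']] := IH W' s' rW' s'W s'pw.
pose v := fun j : 'I_d.+1 => if unlift ord0 j is Some j' then v' j' else u.
have vl : forall j, v (lift ord0 j) = v' j by move=> j; rewrite /v liftK.
have v0 : v ord0 = u by rewrite /v unlift_none.
have v'W' : forall j, (v' j <= W')%MS.
  move=> j; case/andP: eqv' => H1 _; apply: submx_trans H1.
  by rewrite -[X in (X <= _)%MS](rowK (fun j => v' j) j); apply: row_sub.
have v'u : forall j, dot (v' j) u = 0.
  by move=> j; apply/eqP; rewrite -sub_ker_dot; apply: submx_trans (v'W' j) (capmxSr _ _).
exists v; split.
  apply: onb_eq => // [i j|j].
    case: (unliftP ord0 i) => [i'|] ->; case: (unliftP ord0 j) => [j'|] ->;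
      rewrite ?vl ?v0 ?orth' ?uu ?v'u ?eqxx //;
    first [ by rewrite (inj_eq (@lift_inj _ ord0))
          | by rewrite dotC v'u (negbTE (neq_lift _ _))
          | by rewrite v'u eq_sym (negbTE (neq_lift _ _))
          | idtac ].
  case: (unliftP ord0 j) => [j'|] ->; rewrite ?vl ?v0 //.
  by apply: submx_trans (v'W' j') (capmxSl _ _).
move=> a as_; case: (boolP (dot u a == 0)) => ua.
  have [j' Hj'] : exists j', (a <= v' j')%MS by apply: ad'; rewrite mem_filter ua.
  by exists (lift ord0 j'); rewrite vl.
exists ord0; rewrite v0.
case: (a0s a as_) => [H|H]; last by apply: submx_trans H a0u.
by move: ua; rewrite /u dotZl H mulr0 eqxx.
Qed.

End ONB.

End M_A4.
Import M_A4.

Module M_A5.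
Set Implicit Arguments. Unset Strict Implicit. Unset Printing Implicit Defensive.
Local Open Scope ring_scope.

Lemma sum1_ord n : (\sum_(i < n) 1 = n)%N.
Proof. by rewrite sum1_card card_ord. Qed.

Section Counting.
Variables n d : nat.
Definition cnt (f : 'I_n -> 'I_d) j := (\sum_i (f i == j : nat))%N.

Lemma sum_fiber (f : 'I_n -> 'I_d) (g : 'I_d -> nat) :
  (\sum_i g (f i) = \sum_j g j * cnt f j)%N.
Proof.
have -> : (\sum_i g (f i) = \sum_i \sum_j (f i == j) * g j)%N.
  apply: eq_bigr => i _; rewrite (bigD1 (f i)) //= eqxx mul1n big1 ?addn0 // => j.
  by rewrite eq_sym => /negbTE ->.
rewrite exchange_big; apply: eq_bigr => j _; rewrite /cnt big_distrr /=.
by apply: eq_bigr => i _; rewrite mulnC.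
Qed.

Lemma sum_cnt (f : 'I_n -> 'I_d) : (\sum_j cnt f j = n)%N.
Proof.
have := sum_fiber f (fun _ => 1%N); rewrite sum1_ord => ->.
by apply: eq_bigr => j _; rewrite mul1n.
Qed.

Lemma cnt_compl (f : 'I_n -> 'I_d) b : (\sum_j (f j != b : nat) + cnt f b = n)%N.
Proof.
rewrite /cnt -big_split /=; apply: etrans _ (sum1_ord n); apply: eq_bigr => j _.
by case: (f j == b).
Qed.

Lemma cnt_pos (f : 'I_n -> 'I_d) a : (0 < cnt f a)%N -> exists u, f u = a.
Proof.
move=> H; case: (pselect (exists u, f u = a)) => // H'; exfalso.
move: H; rewrite /cnt big1 // => i _; case: eqP => // E; case: H'; by exists i.
Qed.
End Counting.

Section Struct.
Variable R : realType.
Variable m : nat.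
Local Notation vec := 'rV[R]_m.
Variables n d : nat.

Definition structured (W : 'M[R]_m) (z : 'I_n -> vec) (v : 'I_d -> vec) (f : 'I_n -> 'I_d) :=
  onb_of W v /\ forall i, z i != 0 /\ (z i <= v (f i))%MS.

Lemma onb_sub W (v : 'I_d -> vec) j : onb_of W v -> (v j <= W)%MS.
Proof.
move=> [_ /andP[H _]]; apply: submx_trans H.
by rewrite -[X in (X <= _)%MS](rowK (fun j => v j) j); apply: row_sub.
Qed.

Lemma onb_neq0 W (v : 'I_d -> vec) j : onb_of W v -> v j != 0.
Proof.
move=> [o _]; apply/negP => /eqP v0; have := o j j; rewrite v0 dot0l eqxx => /eqP.
by rewrite eq_sym oner_eq0.
Qed.

Lemma struct_scal W z v f i : structured W z v f -> exists a, a != 0 /\ z i = a *: v (f i).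
Proof.
move=> [_ H]; have [z0 /sub_rVP [a za]] := H i; exists a; split => //.
by apply/negP => /eqP a0; move: z0; rewrite za a0 scale0r eqxx.
Qed.

Lemma struct_adj W z v f i j : structured W z v f -> adjn (z i) (z j) = (f i != f j).
Proof.
move=> st; have [a [a0 ->]] := struct_scal i st; have [b [b0 ->]] := struct_scal j st.
have [o _] := st.1; rewrite /adjn dotZl dotZr o.
case: (f i == f j); rewrite ?mulr1 ?mulr0 ?mulf_eq0 ?eqxx ?orbT //=.
by rewrite (negbTE a0) (negbTE b0).
Qed.

Lemma struct_adjv W z v f b j : structured W z v f -> adjn (v b) (z j) = (f j != b).
Proof.
move=> st; have [a [a0 ->]] := struct_scal j st.
have [o _] := st.1; rewrite /adjn dotZr o (eq_sym b (f j)).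
by case: (f j == b) => /=; rewrite ?mulr1 ?mulr0 ?eqxx // (negbTE a0).
Qed.

Lemma S_struct W z v f : structured W z v f ->
  (S z + \sum_j cnt f j * cnt f j = n * n)%N.
Proof.
move=> st; rewrite -sum_fiber /S -big_split /=; apply: etrans _ (_ : \sum_(i < n) n = n * n)%N; last first.
  by rewrite sum_nat_const card_ord.
apply: eq_bigr => i _; rewrite /deg.
under eq_bigr do rewrite (struct_adj _ _ st).
apply: etrans _ (cnt_compl f (f i)); congr (_ + _)%N; apply: eq_bigr => j _; by rewrite eq_sym.
Qed.

Lemma max_balanced W z v f : ismax W z -> structured W z v f ->
  forall a b, (cnt f a <= (cnt f b).+1)%N.
Proof.
move=> [gz mz] st a b; rewrite leqNgt; apply/negP => H.
have ab : a != b by apply/negP => /eqP E; move: H; rewrite E; lia.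
have [u fu] := cnt_pos (leq_ltn_trans (leq0n _) H).
have vb0 := onb_neq0 b st.1.
have gz' : good W (upd z u (v b)) by apply: good_upd => //; exact: onb_sub st.1.
have su := S_upd (proj1 (gz u)) vb0.
rewrite -deg_Dv in su; last exact: (proj1 (gz u)).
have du : (deg z u + cnt f a = n)%N.
  rewrite /deg -fu; apply: etrans _ (cnt_compl f (f u)); congr (_ + _)%N.
  by apply: eq_bigr => j _; rewrite (struct_adj _ _ st) eq_sym.
have dv : (1 + Dv z u (v b) + cnt f b = n)%N.
  apply: etrans _ (cnt_compl f b); rewrite [X in (_ = X + _)%N](bigD1 u) //= fu ab /Dv; congr (_ + _)%N; congr (_ + _)%N.
  by apply: eq_bigr => j _; rewrite (struct_adjv _ _ st).
have := mz _ gz'; lia.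
Qed.

End Struct.

End M_A5.
Import M_A5.

Module M_A6.
Set Implicit Arguments. Unset Strict Implicit. Unset Printing Implicit Defensive.

Definition Q (n d : nat) := (d * (n %/ d * (n %/ d)) + (2 * (n %/ d) + 1) * (n %% d))%N.

Lemma bal_char d n (c : 'I_d -> nat) : 0 < d -> (forall a b, c a <= (c b).+1) ->
  \sum_j c j = n ->
  (forall j, c j = n %/ d \/ c j = (n %/ d).+1) /\ (\sum_j (c j == (n %/ d).+1 : nat) = n %% d).
Proof.
move=> d0 bal sc.
pose j0 := Ordinal d0.
have exP : exists t, [exists j, c j == t] by exists (c j0); apply/existsP; exists j0.
case: (ex_minnP exP) => m0 /existsP [j1 /eqP cj1] minm0.
have hc : forall j, c j = m0 \/ c j = m0.+1.
  move=> j; have h1 : m0 <= c j by apply: minm0; apply/existsP; exists j.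
  have := bal j j1; rewrite cj1; lia.
pose t := \sum_j (c j == m0.+1 : nat).
have sn : n = m0 * d + t.
  rewrite -sc /t (_ : m0 * d = \sum_(j < d) m0); last by rewrite sum_nat_const card_ord mulnC.
  rewrite -big_split /=.
  by apply: eq_bigr => j _; case: (hc j) => ->; rewrite ?eqxx ?addn1 ?addn0 //; case: eqP => //; lia.
have tlt : t < d.
  rewrite /t (bigD1 j1) //= cj1 (_ : (m0 == m0.+1) = false); last by lia.
  rewrite add0n; apply: leq_ltn_trans (_ : _ <= \sum_(j | j != j1) 1) _.
    by apply: leq_sum => j _; case: eqP.
  rewrite sum1_card cardC1 card_ord; lia.
have q : n %/ d = m0 by rewrite sn divnMDl // divn_small // addn0.
have r : n %% d = t by rewrite sn modnMDl modn_small.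
rewrite q r; split => //.
Qed.

Lemma bal_sq d n (c : 'I_d -> nat) : 0 < d -> (forall a b, c a <= (c b).+1) ->
  \sum_j c j = n -> \sum_j c j * c j = Q n d.
Proof.
move=> d0 bal sc; have [hc hs] := bal_char d0 bal sc.
rewrite /Q -hs big_distrr /= (_ : d * _ = \sum_(j < d) (n %/ d * (n %/ d))); last by rewrite sum_nat_const card_ord.
rewrite -big_split /=.
apply: eq_bigr => j _; case: (hc j) => ->; rewrite ?eqxx ?(ltn_eqF (ltnSn _)) /=; lia.
Qed.

Lemma Q_succ d n : 0 < d -> Q n.+1 d = Q n d + 2 * (n %/ d) + 1.
Proof.
move=> d0; rewrite /Q divnS // modnS.
have e1 := divn_eq n d; have e2 := divn_eq n.+1 d; have lt := ltn_pmod n d0.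
case: (boolP (d %| n.+1)) => H /=.
  move: e2; rewrite divnS // H modnS H /= => e2.
  have rd : n %% d = d.-1 by nia.
  rewrite rd; nia.
nia.
Qed.

Lemma Q_add d k t : 0 < d -> Q k d + t * (2 * (k %/ d) + 1) <= Q (k + t) d.
Proof.
move=> d0; elim: t => [|t IH]; first by rewrite addn0 mul0n addn0.
rewrite (addnS k t) Q_succ //.
have : k %/ d <= (k + t) %/ d by apply: leq_div2r; lia.
nia.
Qed.

Definition modo d (H : 0 < d) (n : nat) : 'I_n -> 'I_d := fun i => Ordinal (ltn_pmod i H).
Arguments modo {d} H n.

Lemma cnt_modo d (H : 0 < d) (n : nat) (j : 'I_d) : cnt (modo H n) j = n %/ d + (j < n %% d).
Proof.
rewrite /cnt /modo.
have -> : \sum_(i < n) (Ordinal (ltn_pmod i H) == j : nat) = \sum_(0 <= i < n) (i %% d == j : nat).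
  by rewrite big_mkord; apply: eq_bigr => i _.
elim: n => [|n IH]; first by rewrite big_geq // div0n mod0n.
rewrite big_nat_recr //= IH divnS // modnS.
have lt := ltn_pmod n H; have jd := ltn_ord j.
have e1 := divn_eq n d; have e2 := divn_eq n.+1 d.
case: (boolP (d %| n.+1)) => Hd /=.
  move: e2; rewrite divnS // Hd modnS Hd /= => e2.
  have rd : n %% d = d.-1 by nia.
  rewrite rd; case: (@eqP _ (d.-1 : nat) j) => h'; case: (ltngtP j d.-1) => h; lia.
case: (@eqP _ (n %% d : nat) j) => h'; case: (ltngtP j (n %% d)) => h; lia.
Qed.

Lemma modo_bal d (H : 0 < d) (n : nat) (a b : 'I_d) : cnt (modo H n) a <= (cnt (modo H n) b).+1.
Proof. rewrite !cnt_modo; case: (_ < _); case: (_ < _); lia. Qed.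

End M_A6.
Import M_A6.

Module M_A7.
Set Implicit Arguments. Unset Strict Implicit. Unset Printing Implicit Defensive.
Local Open Scope ring_scope.

Section Core.
Variable R : realType.
Variable m : nat.
Local Notation vec := 'rV[R]_m.
Variables n d : nat.
Variable W : 'M[R]_m.
Hypothesis rW : \rank W = d.
Hypothesis d0 : (0 < d)%N.

Lemma S_le (z : 'I_n -> vec) : (S z <= n * n)%N.
Proof.
rewrite /S; apply: leq_trans (_ : _ <= \sum_(i < n) n)%N _; last by rewrite sum_nat_const card_ord.
apply: leq_sum => i _; rewrite /deg; apply: leq_trans (_ : _ <= \sum_(j < n) 1)%N _; last by rewrite sum1_ord.
by apply: leq_sum => j _; apply: adjn_le1.
Qed.

Lemma exists_onb : exists v : 'I_d -> vec, onb_of W v.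
Proof.
have [v [o _]] := @onb_adapted R m d W [::] rW (fun a (H : a \in [::]) => False_ind _ (notF H))
  (fun a b (H : a \in [::]) _ => False_ind _ (notF H)).
by exists v.
Qed.

Lemma exists_good : exists z : 'I_n -> vec, good W z.
Proof.
have [v o] := exists_onb.
exists (fun _ => v (Ordinal d0)) => i; split; [exact: onb_neq0 o|exact: onb_sub o].
Qed.

Lemma exists_max : exists z : 'I_n -> vec, ismax W z.
Proof.
have [z0 g0] := exists_good.
pose P : pred nat := fun t => `[< exists z : 'I_n -> vec, good W z /\ S z = t >].
have exP : exists t, P t by exists (S z0); apply/asboolP; exists z0.
have ubP : forall t, P t -> (t <= n * n)%N by move=> t /asboolP [z [_ <-]]; exact: S_le.
case: (ex_maxnP exP ubP) => t /asboolP [z [gz Sz]] mx.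
exists z; split => // z' gz'; rewrite Sz; apply: mx; apply/asboolP; by exists z'.
Qed.

Definition balanced (f : 'I_n -> 'I_d) := forall a b, (cnt f a <= (cnt f b).+1)%N.

Lemma max_struct (z : 'I_n -> vec) : ismax W z -> exists v f, structured W z v f /\ balanced f.
Proof.
move=> mz; have gz := mz.1.
pose s := [seq z i | i <- index_enum 'I_n].
have [v [o ad]] : exists v : 'I_d -> vec, onb_of W v /\ forall a, a \in s -> exists j, (a <= v j)%MS.
  apply: onb_adapted => //.
    by move=> a /mapP [i _ ->]; exact: gz.
  by move=> a b /mapP [i _ ->] /mapP [j _ ->]; exact: max_pairwise mz i j.
have : forall i, exists j, (z i <= v j)%MS.
  by move=> i; apply: ad; apply: map_f; rewrite mem_index_enum.
case/fin_all_exists => f Hf.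
have st : structured W z v f by split => // i; split; [exact: (proj1 (gz i))|exact: Hf].
exists v, f; split => //; exact: max_balanced mz st.
Qed.

Lemma core_ach (z : 'I_n -> vec) (v : 'I_d -> vec) (f : 'I_n -> 'I_d) : structured W z v f -> balanced f -> (S z + Q n d = n * n)%N.
Proof.
move=> st bal; rewrite -(S_struct st); congr (_ + _)%N.
by rewrite (bal_sq d0 bal (sum_cnt f)).
Qed.

Lemma core_bound (z : 'I_n -> vec) : good W z -> (S z + Q n d <= n * n)%N.
Proof.
move=> gz; have [zm mz] := exists_max; have [v [f [st bal]]] := max_struct mz.
have := core_ach st bal; have := mz.2 _ gz; lia.
Qed.

Lemma core_eq (z : 'I_n -> vec) : good W z -> (S z + Q n d = n * n)%N ->
  exists v f, structured W z v f /\ balanced f.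
Proof.
move=> gz e; apply: max_struct; split => // z' gz'.
have := core_bound gz'; lia.
Qed.

End Core.

End M_A7.
Import M_A7.

Module M_A8.
Set Implicit Arguments. Unset Strict Implicit. Unset Printing Implicit Defensive.

Lemma card_set_sum n (P : 'I_n -> bool) : #|[set i | P i]| = \sum_i (P i : nat).
Proof. by rewrite -sum1_card big_mkcond /=; apply: eq_bigr => i _; rewrite inE; case: (P i). Qed.

Lemma perm_fun (T : eqType) n (f g : 'I_n -> T) :
  (forall t : T, \sum_i (f i == t : nat) = \sum_i (g i == t : nat)) ->
  exists s : 'S_n, forall i, f (s i) = g i.
Proof.
move=> H.
pose tf := [tuple f i | i < n]; pose tg := [tuple g i | i < n].
have cnt_t : forall (h : 'I_n -> T) t, count_mem t [tuple h i | i < n] = \sum_i (h i == t : nat).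
  move=> h t; rewrite /= -sum1_count big_map big_enum_cond /= big_mkcond /=.
  by apply: eq_bigr => i _; rewrite eq_sym; case: (h i == t).
have pe : perm_eq tg tf.
  rewrite /perm_eq; apply/allP => t _ /=; by rewrite !cnt_t H.
case/tuple_permP: pe => p E.
exists p => i.
have E' : tg = [tuple tnth tf (p i) | i < n] by apply: val_inj.
by have := congr1 (fun t => tnth t i) E'; rewrite /= !tnth_mktuple => <-.
Qed.

Lemma char_count d q r (c : 'I_d -> nat) : (forall j, c j = q \/ c j = q.+1) ->
  \sum_j (c j == q.+1 : nat) = r ->
  forall t, \sum_j (c j == t : nat) = (t == q.+1) * r + (t == q) * (d - r).
Proof.
move=> hc hs t.
have hs' : \sum_j (c j != q.+1 : nat) = d - r.
  rewrite -hs; apply/eqP; rewrite -(eqn_add2r (\sum_j (c j == q.+1 : nat))) subnK; last first.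
    by apply: leq_trans (_ : _ <= \sum_(j < d) 1) _; [apply: leq_sum => j _; case: (_ == _)|rewrite sum1_ord].
  by rewrite -big_split /=; apply/eqP; apply: etrans _ (sum1_ord d); apply: eq_bigr => j _; case: (_ == _).
rewrite -hs' -hs !big_distrr /= -big_split /=; apply: eq_bigr => j _.
case: (hc j) => ->; rewrite ?eqxx ?(ltn_eqF (ltnSn _)) /=.
  by rewrite (eq_sym q t); case: (t == q); case: (t == q.+1); rewrite //= muln0.
by rewrite (eq_sym q.+1 t); case: (t == q); case: (t == q.+1).
Qed.

End M_A8.
Import M_A8.

Module M_A9.
Set Implicit Arguments. Unset Strict Implicit. Unset Printing Implicit Defensive.
Local Open Scope ring_scope.

Section Einf.
Variable R : realType.
Variable m : nat.
Local Notation vec := 'rV[R]_m.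
Variable N : nat.

Lemma Einf_S (x : 'I_N -> vec) : Einf x = 2^-1 * (S x)%:R.
Proof.
rewrite /Einf /S natr_sum; congr (_ * _); apply: eq_bigr => i _.
rewrite /deg natr_sum; apply: eq_bigr => j _; rewrite /Lam /adjn; by case: (_ == _).
Qed.

Lemma Einf_le (x y : 'I_N -> vec) : (Einf x <= Einf y) = (S x <= S y)%N.
Proof. by rewrite !Einf_S ler_pM2l ?invr_gt0 ?ltr0n // ler_nat. Qed.

Lemma card_dirac (x : 'I_N -> vec) (h : vec -> nat) t :
  dirac_sum x [set w | h w = t] = (\sum_i (h (x i) == t : nat))%N.
Proof.
rewrite /dirac_sum card_set_sum; apply: eq_bigr => i _.
by case: (h (x i) =P t) => H; [rewrite asboolT|rewrite asboolF].
Qed.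

Lemma sum_h_dirac (x : 'I_N -> vec) (h : vec -> nat) B : (forall w, h w <= B)%N ->
  (\sum_i h (x i) = \sum_(t < B.+1) t * dirac_sum x [set w | h w = t])%N.
Proof.
move=> hB.
have -> : (\sum_i h (x i) = \sum_i \sum_(t < B.+1) t * (h (x i) == t))%N.
  apply: eq_bigr => i _; have lt : (h (x i) < B.+1)%N by rewrite ltnS.
  rewrite (bigD1 (Ordinal lt)) //= eqxx muln1 big1 ?addn0 // => t.
  by rewrite -val_eqE /= eq_sym => /negbTE ->; rewrite muln0.
rewrite exchange_big; apply: eq_bigr => t _; rewrite card_dirac big_distrr.
by apply: eq_bigr.
Qed.

Lemma dirac_sum_eq (x y : 'I_N -> vec) (h : vec -> nat) B : (forall w, h w <= B)%N ->
  dirac_sum x = dirac_sum y -> (\sum_i h (x i) = \sum_i h (y i))%N.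
Proof. by move=> hB E; rewrite !(sum_h_dirac _ hB) E. Qed.

Lemma S_dirac (x y : 'I_N -> vec) : dirac_sum x = dirac_sum y -> S x = S y.
Proof.
move=> E.
have e1 : forall w, (\sum_j adjn w (x j) = \sum_j adjn w (y j))%N.
  by move=> w; apply: (@dirac_sum_eq x y (fun w' => adjn w w') 1%N) => // w'; exact: adjn_le1.
rewrite /S /deg.
under eq_bigr do rewrite e1.
apply: (@dirac_sum_eq x y (fun w => \sum_j adjn w (y j))%N N) => // w.
apply: leq_trans (_ : _ <= \sum_(j < N) 1)%N _; last by rewrite sum1_ord.
by apply: leq_sum => j _; exact: adjn_le1.
Qed.

Lemma in_MN_dirac (x y : 'I_N -> vec) : dirac_sum x = dirac_sum y -> in_MN y -> in_MN x.
Proof.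
move=> E hy i.
have := @dirac_sum_eq x y (fun w => (dot w w != 1 : nat)) 1%N (fun w => leq_b1 _) E.
rewrite [X in (_ = X)%N]big1; last by move=> j _; rewrite (hy j) eqxx.
move/eqP; rewrite sum_nat_eq0 => /forallP /(_ i) /implyP /(_ isT).
by rewrite eqb0 negbK => /eqP.
Qed.

Lemma dirac_perm (x : 'I_N -> vec) (s : 'S_N) : dirac_sum x = dirac_sum (fun i => x (s i)).
Proof.
apply: funext => A; rewrite /dirac_sum !card_set_sum.
by rewrite (reindex_inj (@perm_inj _ s)).
Qed.

End Einf.

Section Unit.
Variable R : realType.
Variable m : nat.
Local Notation vec := 'rV[R]_m.

Lemma unit_antip (a b : vec) : dot a a = 1 -> dot b b = 1 -> (a <= b)%MS -> antip a b.
Proof.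
move=> aa bb /sub_rVP [c E].
move: aa; rewrite E dotZl dotZr bb mulr1 -expr2 => /eqP; rewrite sqrf_eq1.
case/orP => /eqP ->; [left; by rewrite scale1r|right; by rewrite scaleN1r].
Qed.

Lemma antip_sub (a b : vec) : antip a b -> (a <= b)%MS.
Proof. by case=> ->; [|rewrite -scaleN1r; apply: scalemx_sub]. Qed.

Lemma unit_neq0 (a : vec) : dot a a = 1 -> a != 0.
Proof. by move=> H; apply/negP => /eqP a0; move: H; rewrite a0 dot0l => /eqP; rewrite eq_sym oner_eq0. Qed.

End Unit.

End M_A9.
Import M_A9.

Module M_A10.
Set Implicit Arguments. Unset Strict Implicit. Unset Printing Implicit Defensive.
Local Open Scope ring_scope.

Lemma bal_same_counts d n (f g : 'I_n -> 'I_d) : (0 < d)%N -> balanced f -> balanced g ->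
  forall t, (\sum_j (cnt f j == t : nat) = \sum_j (cnt g j == t : nat))%N.
Proof.
move=> d0 bf bg t.
have [hf sf] := bal_char d0 bf (sum_cnt f).
have [hg sg] := bal_char d0 bg (sum_cnt g).
by rewrite (char_count hf sf) (char_count hg sg).
Qed.

Lemma align_perm d n (f g : 'I_n -> 'I_d) : (0 < d)%N -> balanced f -> balanced g ->
  exists (s : 'S_n) (t : 'S_d), forall i, f (s i) = t (g i).
Proof.
move=> d0 bf bg.
have [t Ht] := perm_fun (bal_same_counts d0 bf bg).
have H : forall u : 'I_d, (\sum_i (f i == u : nat) = \sum_i (t (g i) == u : nat))%N.
  move=> u; have -> : (\sum_i (t (g i) == u : nat) = cnt g ((t^-1)%g u))%N.
    by apply: eq_bigr => i _; rewrite -{1}(permKV t u) (inj_eq (@perm_inj _ t)).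
  by rewrite -Ht permKV.
have [s Hs] := perm_fun H.
by exists s, t.
Qed.

Lemma part_a (R : realType) (D N : nat) :
  forall x : 'I_N -> 'rV[R]_(D.+1),
     maximizes (@in_MN R D.+1 N) x <->
     exists (v : 'I_(D.+1) -> 'rV[R]_(D.+1)) (y : 'I_N -> 'rV[R]_(D.+1)),
       [/\ onb_of 1%:M v, in_MN y, dirac_sum x = dirac_sum y &
           forall (i : 'I_N) (j : 'I_(D.+1)),
             (i %% D.+1 = j)%N -> antip (y i) (v j)].
Proof.
move=> x.
have d0 : (0 < D.+1)%N by [].
pose W : 'M[R]_(D.+1) := 1%:M.
have rW : \rank W = D.+1 by rewrite mxrank1.
have goodW : forall z : 'I_N -> 'rV[R]_(D.+1), in_MN z -> good W z.
  by move=> z iz i; split; [exact: unit_neq0 (iz i)|exact: submx1].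
pose g0 := modo d0 N.
split.
  case=> inx mx.
  have [e oe] := exists_onb rW.
  pose y0 := fun i => e (g0 i).
  have st0 : structured W y0 e g0.
    by split => // i; split; [exact: onb_neq0 oe|exact: submx_refl].
  have ach0 := core_ach d0 st0 (modo_bal d0 N).
  have in0 : in_MN y0 by move=> i; rewrite /on_sphere /y0 (oe.1) eqxx.
  have le0 := mx _ in0; rewrite Einf_le in le0.
  have bd := core_bound rW d0 (goodW x inx).
  have eq : (S x + Q N D.+1 = N * N)%N by lia.
  have [v [f [st bal]]] := core_eq rW d0 (goodW x inx) eq.
  have [s [t Hst]] := align_perm d0 bal (modo_bal d0 N).
  exists (fun j => v (t j)), (fun i => x (s i)); split.
  - apply: onb_eq => // [i j|j]; last exact: submx1.
    by rewrite (st.1.1) (inj_eq (@perm_inj _ t)).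
  - by move=> i; exact: inx.
  - exact: dirac_perm.
  - move=> i j Hij.
    have gj : g0 i = j by apply: val_inj.
    apply: unit_antip; [exact: inx|by rewrite st.1.1 eqxx|].
    by rewrite -gj -Hst; exact: (proj2 (st.2 (s i))).
case=> v [y [ov iny E H]].
have inx := in_MN_dirac E iny.
split => // z inz; rewrite Einf_le (S_dirac E).
have st : structured W y v g0.
  split => // i; split; first exact: unit_neq0 (iny i).
  by apply: antip_sub; apply: H.
have ach := core_ach d0 st (modo_bal d0 N).
have bd := core_bound rW d0 (goodW z inz).
lia.
Qed.

End M_A10.
Import M_A10.

Module M_B1.
Set Implicit Arguments. Unset Strict Implicit. Unset Printing Implicit Defensive.
Local Open Scope ring_scope.

Section PFacts.
Variable R : realType.
Variable D : nat.
Local Notation vec := 'rV[R]_(D.+1).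
Variable V : 'M[R]_(D.+1).
Variable p : vec.
Hypothesis rV : \rank V = D.
Hypothesis hpV : forall u : vec, (u <= V)%MS -> dot u p = 0.
Hypothesis hpp : dot p p = 1.

Lemma Fp2 (w : vec) : dot w p = 0 -> (w <= V)%MS.
Proof.
move=> hw; apply/negPn/negP => nw.
have lt : (V < V + w)%MS.
  rewrite ltmxE addsmxSl /=; apply/negP => H; move/negP: nw; apply.
  exact: submx_trans (addsmxSr _ _) H.
move: lt; rewrite ltmxErank => /andP[_ lt].
have full : row_full (V + w)%MS.
  by rewrite /row_full eqn_leq rank_leq_col /=; move: lt; rewrite rV.
have := submx_full p full; case/sub_addsmxP => u E.
move: hpp; rewrite {1}E dotDl hpV ?submxMl // add0r.
by rewrite (mx11_scalar u.2) mul_scalar_mx dotZl hw mulr0 => /eqP; rewrite eq_sym oner_eq0.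
Qed.

Definition cp (y : vec) := dot y p.
Definition zp (y : vec) := y - cp y *: p.

Lemma zp_p y : dot (zp y) p = 0.
Proof. by rewrite /zp dotBl dotZl hpp mulr1 subrr. Qed.

Lemma zp_V y : (zp y <= V)%MS.
Proof. exact: Fp2 (zp_p y). Qed.

Lemma dot_decomp y y' : dot y y' = dot (zp y) (zp y') + cp y * cp y'.
Proof.
have ey : y = zp y + cp y *: p by rewrite /zp subrK.
have ey' : y' = zp y' + cp y' *: p by rewrite /zp subrK.
rewrite {1}ey {1}ey'; move: (zp_p y) (zp_p y'); move: (zp y) (zp y') => a b ha hb.
rewrite !dotDl !dotDr !dotZl !dotZr ha (dotC p b) hb hpp; ring.
Qed.

Lemma inV y : (y <= V)%MS = (cp y == 0).
Proof. by apply/idP/eqP => [/hpV|/Fp2]. Qed.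

Lemma zp_inV y : (y <= V)%MS -> zp y = y.
Proof. by rewrite inV => /eqP c0; rewrite /zp c0 scale0r subr0. Qed.

Lemma zp0_antip y : on_sphere y -> zp y = 0 -> antip y p.
Proof.
move=> uy z0; apply: unit_antip => //.
by apply/sub_rVP; exists (cp y); apply/eqP; rewrite -subr_eq0 -/(zp y) z0.
Qed.

Lemma antip_zp y : antip y p -> zp y = 0.
Proof.
by case=> ->; rewrite /zp /cp ?dotNl hpp ?scaleN1r ?scale1r ?subrr // scaleNr opprK addrC subrr.
Qed.

Lemma not_inV_p : ~~ (p <= V)%MS.
Proof. by rewrite inV /cp hpp oner_eq0. Qed.

End PFacts.

End M_B1.
Import M_B1.

Module M_B2.
Set Implicit Arguments. Unset Strict Implicit. Unset Printing Implicit Defensive.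
Local Open Scope ring_scope.

Lemma KI_arith S SP Qk Qkm k m1 m2 N q : (S <= SP + (m1 * m1 - m1) + 2 * m2 * k ->
  SP + Qkm <= (k + m1) * (k + m1) -> Qk + m1 * (2 * q + 1) <= Qkm -> m1 <= q -> k + m1 + m2 = N ->
  S + Qk + 2 * m1 <= k * k + 2 * k * (N - k))%N.
Proof. move=> h1 h2 h3 h4 h5. have h6 : (m1 * m1 <= m1 * q)%N by apply: leq_mul. nia. Qed.

Section Sums.
Variable N : nat.
Lemma sum_prod (u w : 'I_N -> bool) :
  (\sum_i \sum_j (u i && w j : nat) = (\sum_i (u i : nat)) * (\sum_j (w j : nat)))%N.
Proof.
rewrite big_distrl /=; apply: eq_bigr => i _; rewrite big_distrr /=.
by apply: eq_bigr => j _; case: (u i); case: (w j).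
Qed.

Lemma sum_pairs (u : 'I_N -> bool) :
  (\sum_i \sum_j (u i && u j && (i != j) : nat) + \sum_i (u i : nat) =
   (\sum_i (u i : nat)) * (\sum_j (u j : nat)))%N.
Proof.
rewrite -sum_prod -big_split /=; apply: eq_bigr => i _.
rewrite [X in (_ = X)%N](bigD1 i) //= [X in (X + _ = _)%N](bigD1 i) //= eqxx andbF add0n addnC.
congr (_ + _)%N; first by case: (u i).
by apply: eq_bigr => j ji; rewrite eq_sym ji andbT.
Qed.
End Sums.

Section Transport.
Variable R : realType.
Variable m N : nat.
Local Notation vec := 'rV[R]_m.

Lemma sum_enum_val (P : {set 'I_N}) (F : 'I_N -> nat) :
  (\sum_(j in P) F j = \sum_(t < #|P|) F (enum_val t))%N.
Proof. exact: big_enum_val. Qed.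

Lemma S_transport (P : {set 'I_N}) (y : 'I_N -> vec) :
  S (fun t : 'I_#|P| => y (enum_val t)) =
  (\sum_i \sum_j ((i \in P) && (j \in P)) * adjn (y i) (y j))%N.
Proof.
rewrite /S /deg.
have -> : (\sum_(t < #|P|) \sum_(t' < #|P|) adjn (y (enum_val t)) (y (enum_val t')) =
          \sum_(t < #|P|) (fun i => \sum_(j in P) adjn (y i) (y j)) (enum_val t))%N.
  by apply: eq_bigr => t _ /=; rewrite (sum_enum_val P (fun j => adjn (y (enum_val t)) (y j))).
rewrite -(sum_enum_val P (fun i => \sum_(j in P) adjn (y i) (y j))%N) /=.
rewrite big_mkcond /=; apply: eq_bigr => i _; rewrite big_mkcond /=.
case: (i \in P) => /=; last by rewrite big1 // => j _; rewrite mul0n.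
by apply: eq_bigr => j _; case: (j \in P); rewrite ?mul0n ?mul1n.
Qed.

End Transport.

End M_B2.
Import M_B2.

Module M_B3.
Set Implicit Arguments. Unset Strict Implicit. Unset Printing Implicit Defensive.
Local Open Scope ring_scope.

Section Class.
Variable R : realType.
Variable D : nat.
Local Notation vec := 'rV[R]_(D.+1).
Variable V : 'M[R]_(D.+1).
Variable p : vec.
Hypothesis rV : \rank V = D.
Hypothesis hpV : forall u : vec, (u <= V)%MS -> dot u p = 0.
Hypothesis hpp : dot p p = 1.
Variable N : nat.

Definition ina (y : 'I_N -> vec) i := (y i <= V)%MS.
Definition inb (y : 'I_N -> vec) i := zp p (y i) != 0.
Definition u1 y i := ~~ ina y i && inb y i.
Definition u2 y i := ~~ ina y i && ~~ inb y i.

Lemma ina_inb y i : on_sphere (y i) -> ina y i -> inb y i.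
Proof. by move=> uy a; rewrite /inb (zp_inV rV hpV hpp a); exact: unit_neq0. Qed.

Lemma cp_nz y i : ~~ ina y i -> cp p (y i) != 0.
Proof. by rewrite /ina (inV rV hpV hpp). Qed.

Lemma cp_z y i : ina y i -> cp p (y i) = 0.
Proof. by rewrite /ina (inV rV hpV hpp) => /eqP. Qed.

Lemma PW (y : 'I_N -> vec) (uy : in_MN y) i j :
  (adjn (y i) (y j) <= (inb y i && inb y j) * adjn (zp p (y i)) (zp p (y j))
   + (u1 y i && u1 y j && (i != j)) + (u2 y i && ina y j) + (ina y i && u2 y j))%N.
Proof.
have dd := dot_decomp hpp (y i) (y j).
case E: (adjn (y i) (y j)) (adjn_le1 (y i) (y j)) => [|[|//]] // _.
have dy : dot (y i) (y j) = 0 by apply/adjn1.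
rewrite dd in dy.
rewrite /u1 /u2.
case Ai: (ina y i); case Aj: (ina y j).
- have Hz : adjn (zp p (y i)) (zp p (y j)) = 1%N.
    by apply/adjn1; rewrite (cp_z Ai) mul0r addr0 in dy.
  rewrite (ina_inb (uy i) Ai) (ina_inb (uy j) Aj) Hz /=; lia.
- have Hz : dot (zp p (y i)) (zp p (y j)) = 0 by rewrite (cp_z Ai) mul0r addr0 in dy.
  case Bj: (inb y j); rewrite (ina_inb (uy i) Ai) /=; last by lia.
  by rewrite (proj2 (adjn1 _ _) Hz); lia.
- have Hz : dot (zp p (y i)) (zp p (y j)) = 0 by rewrite (cp_z Aj) mulr0 addr0 in dy.
  case Bi: (inb y i); rewrite (ina_inb (uy j) Aj) /=; last by lia.
  by rewrite (proj2 (adjn1 _ _) Hz); lia.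
- have ci := cp_nz (negbT Ai); have cj := cp_nz (negbT Aj).
  have Bi : inb y i.
    rewrite /inb; apply/eqP => zi; move: dy; rewrite zi dot0l add0r => /eqP.
    by rewrite mulf_eq0 (negbTE ci) (negbTE cj).
  have Bj : inb y j.
    rewrite /inb; apply/eqP => zj; move: dy; rewrite zj dot0r add0r => /eqP.
    by rewrite mulf_eq0 (negbTE ci) (negbTE cj).
  have ij : i != j.
    apply/negP => /eqP ij; move: E; rewrite ij adjn_self //; exact: unit_neq0 (uy j).
  rewrite Bi Bj ij /=; lia.
Qed.

Lemma PWE (y : 'I_N -> vec) (uy : in_MN y) (hnoB : forall i, ~~ u1 y i) i j :
  adjn (y i) (y j) = ((ina y i && ina y j) * adjn (y i) (y j)
   + (~~ ina y i && ina y j) + (ina y i && ~~ ina y j))%N.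
Proof.
have dd := dot_decomp hpp (y i) (y j).
have zB : forall i, ~~ ina y i -> zp p (y i) = 0.
  move=> i' a; have := hnoB i'; rewrite /u1 a /= /inb negbK => /eqP //.
case Ai: (ina y i); case Aj: (ina y j) => /=.
- by rewrite mul1n !addn0.
- by rewrite /adjn dd (zB j (negbT Aj)) dot0r (cp_z Ai) mul0r addr0 eqxx.
- by rewrite /adjn dd (zB i (negbT Ai)) dot0l (cp_z Aj) mulr0 addr0 eqxx.
- have ci := cp_nz (negbT Ai); have cj := cp_nz (negbT Aj).
  by rewrite /adjn dd (zB i (negbT Ai)) dot0l add0r mulf_eq0 (negbTE ci) (negbTE cj).
Qed.

Definition ka y := (\sum_i (ina y i : nat))%N.
Definition m1 y := (\sum_i (u1 y i : nat))%N.
Definition m2 y := (\sum_i (u2 y i : nat))%N.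
Definition SP y := (\sum_i \sum_j (inb y i && inb y j) * adjn (zp p (y i)) (zp p (y j)))%N.
Definition SA y := (\sum_i \sum_j (ina y i && ina y j) * adjn (y i) (y j))%N.
Definition Aset y := [set i | ina y i].
Definition Pset y := [set i | inb y i].

Lemma ka_card y : ka y = #|Aset y|.
Proof. by rewrite /Aset card_set_sum. Qed.

Lemma split_N y : (ka y + m1 y + m2 y = N)%N.
Proof.
rewrite /ka /m1 /m2 -!big_split /=; apply: etrans _ (sum1_ord N); apply: eq_bigr => i _.
by rewrite /u1 /u2; case: (ina y i); case: (inb y i).
Qed.

Lemma S_le_y y : in_MN y -> (S y <= SP y + (m1 y * m1 y - m1 y) + 2 * m2 y * ka y)%N.
Proof.
move=> uy.
have H1 : (S y <= \sum_i \sum_j ((inb y i && inb y j) * adjn (zp p (y i)) (zp p (y j))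
   + (u1 y i && u1 y j && (i != j)) + (u2 y i && ina y j) + (ina y i && u2 y j)))%N.
  by apply: leq_sum => i _; apply: leq_sum => j _; exact: PW.
have E : (\sum_i \sum_j ((inb y i && inb y j) * adjn (zp p (y i)) (zp p (y j))
   + (u1 y i && u1 y j && (i != j)) + (u2 y i && ina y j) + (ina y i && u2 y j)) =
   SP y + \sum_i \sum_j (u1 y i && u1 y j && (i != j) : nat) + m2 y * ka y + ka y * m2 y)%N.
  rewrite /m2 /ka -!sum_prod /SP -!big_split /=; apply: eq_bigr => i _; by rewrite -!big_split.
have X := sum_pairs (u1 y).
rewrite -/(m1 y) in X.
rewrite E in H1; lia.
Qed.

Lemma S_eq_y y : in_MN y -> (forall i, ~~ u1 y i) ->
  S y = (SA y + 2 * (N - ka y) * ka y)%N.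
Proof.
move=> uy hnoB.
have E : S y = (SA y + \sum_i \sum_j (~~ ina y i && ina y j : nat) + \sum_i \sum_j (ina y i && ~~ ina y j : nat))%N.
  rewrite /S /deg /SA -!big_split /=; apply: eq_bigr => i _; rewrite -!big_split /=.
  by apply: eq_bigr => j _; exact: PWE.
have C : (\sum_i (~~ ina y i : nat) + ka y = N)%N.
  rewrite /ka -big_split /=; apply: etrans _ (sum1_ord N); apply: eq_bigr => i _; by case: (ina y i).
rewrite E !sum_prod -/(ka y); nia.
Qed.

Lemma SP_transport y : SP y = S (fun t : 'I_#|Pset y| => zp p (y (enum_val t))).
Proof.
rewrite (S_transport (Pset y) (fun i => zp p (y i))) /SP; apply: eq_bigr => i _; apply: eq_bigr => j _.
by rewrite !inE.
Qed.

Lemma SA_transport y : SA y = S (fun t : 'I_#|Aset y| => y (enum_val t)).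
Proof.
rewrite (S_transport (Aset y) y) /SA; apply: eq_bigr => i _; apply: eq_bigr => j _.
by rewrite !inE.
Qed.

Hypothesis D0 : (0 < D)%N.

Lemma KI y k : in_MNkV V k y -> (D * N <= k * D.+1)%N -> (k <= N)%N ->
  (S y + Q k D + 2 * m1 y <= k * k + 2 * k * (N - k))%N.
Proof.
move=> [uy cy] hDN hkN.
have kk : ka y = k by rewrite ka_card.
pose w := fun t : 'I_#|Pset y| => zp p (y (enum_val t)).
have gw : good V w.
  move=> t; split; last exact: zp_V rV hpV hpp _.
  by have := enum_valP t; rewrite inE.
have cb := core_bound rV D0 gw.
have cardP : #|Pset y| = (ka y + m1 y)%N.
  rewrite /Pset card_set_sum /ka /m1 -big_split /=; apply: eq_bigr => i _.
  rewrite /u1; case A: (ina y i) => /=; last by case: (inb y i).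
  by rewrite (ina_inb (uy i) A).
have HQ : Q #|Pset y| D = Q (k + m1 y) D by rewrite cardP kk.
have Qa := Q_add k (m1 y) D0.
have sp := split_N y.
have m1le : (m1 y <= k %/ D)%N.
  rewrite leq_divRL //.
  have : (m1 y <= N - k)%N by lia.
  move=> h; apply: leq_trans (_ : _ <= (N - k) * D)%N _; first exact: leq_mul.
  nia.
have sle := S_le_y uy.
rewrite SP_transport -/w kk in sle.
apply: (KI_arith sle (_ : S w + Q (k + m1 y) D <= (k + m1 y) * (k + m1 y))%N Qa m1le); last lia.
have e2 : (#|Pset y| * #|Pset y| = (k + m1 y) * (k + m1 y))%N by rewrite cardP kk.
by move: cb; rewrite HQ e2.
Qed.

Lemma noB_of_m1 y : m1 y = 0%N -> forall i, ~~ u1 y i.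
Proof.
by move/eqP; rewrite /m1 sum_nat_eq0 => /forallP H i; have := H i; rewrite implyTb eqb0.
Qed.

Lemma S_noB y k : in_MNkV V k y -> (forall i, ~~ u1 y i) ->
  S y = (S (fun t : 'I_#|Aset y| => y (enum_val t)) + 2 * (N - k) * k)%N.
Proof.
move=> [uy cy] hnoB; have kk : ka y = k by rewrite ka_card.
by rewrite (S_eq_y uy hnoB) SA_transport kk.
Qed.

Lemma good_A y : in_MN y -> good V (fun t : 'I_#|Aset y| => y (enum_val t)).
Proof.
move=> uy t; split; first exact: unit_neq0 (uy _).
by have := enum_valP t; rewrite inE.
Qed.

End Class.

End M_B3.
Import M_B3.

Module M_B4.
Set Implicit Arguments. Unset Strict Implicit. Unset Printing Implicit Defensive.

Lemma ceil_gt D k : (0 < D)%N -> (0 < k %% D)%N -> ceil_div k D = (k %/ D).+1.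
Proof.
move=> D0 r0; rewrite /ceil_div {1}(divn_eq k D) -addnA divnMDl //.
have -> : (k %% D + D.-1 = 1 * D + (k %% D).-1)%N.
  by move: r0; case: (k %% D) => // r _; case: D D0 => // D _ /=; lia.
have lt := ltn_pmod k D0.
rewrite divnMDl // (@divn_small (k %% D).-1 D); first by rewrite addn0 addn1.
exact: leq_ltn_trans (leq_pred _) lt.
Qed.

Lemma ceil_eq D k : (0 < D)%N -> k %% D = 0%N -> ceil_div k D = (k %/ D).
Proof.
move=> D0 r0; rewrite /ceil_div {1}(divn_eq k D) r0 addn0 divnMDl // (@divn_small D.-1 D) ?addn0 //.
by case: D D0 {r0}.
Qed.

Lemma ceil_bounds D k : (0 < D)%N -> (k %/ D <= ceil_div k D <= (k %/ D).+1)%N.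
Proof.
move=> D0; case: (posnP (k %% D)) => r.
  by rewrite ceil_eq // leqnn leqnSn.
by rewrite ceil_gt // leqnSn leqnn.
Qed.

Lemma sum_lt_k N k : (k <= N)%N -> (\sum_(i < N) ((i < k)%N : nat) = k)%N.
Proof.
move=> kN; rewrite -big_mkcond /= (big_ord_narrow kN) /=.
by rewrite sum1_ord.
Qed.

Local Open Scope ring_scope.

Section Main.
Variable R : realType.
Variable D : nat.
Local Notation vec := 'rV[R]_(D.+1).
Variable V : 'M[R]_(D.+1).
Variable p : vec.
Hypothesis rV : \rank V = D.
Hypothesis hpV : forall u : vec, (u <= V)%MS -> dot u p = 0.
Hypothesis hpp : dot p p = 1.
Variable N : nat.
Hypothesis D0 : (0 < D)%N.

Lemma witness k : (k <= N)%N ->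
  exists y : 'I_N -> vec, in_MNkV V k y /\ (S y + Q k D = k * k + 2 * k * (N - k))%N.
Proof.
move=> kN; have [e oe] := exists_onb rV.
pose y := fun i : 'I_N => if (i < k)%N then e (modo D0 N i) else p.
have ue : forall j, dot (e j) (e j) = 1 by move=> j; rewrite oe.1 eqxx.
have uy : in_MN y by move=> i; rewrite /on_sphere /y; case: ifP => _; [exact: ue|exact: hpp].
have ay : forall i, ina V y i = (i < k)%N.
  move=> i; rewrite /ina /y; case: ifP => _; first exact: onb_sub oe.
  exact/negbTE/(not_inV_p rV hpV hpp).
have cy : #|[set i | (y i <= V)%MS]| = k.
  rewrite card_set_sum; apply: etrans _ (sum_lt_k kN); apply: eq_bigr => i _.
  by rewrite -ay.
have hnoB : forall i, ~~ u1 V p y i.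
  move=> i; rewrite /u1 /inb ay; case: (boolP (i < k)%N) => //= ni.
  have -> : y i = p by rewrite /y (negbTE ni).
  by rewrite (antip_zp hpp (or_introl erefl)) eqxx.
have cyk : in_MNkV V k y by split.
have Sy := S_noB rV hpV hpp cyk hnoB.
pose f := fun t : 'I_#|Aset V y| => modo D0 N (enum_val t).
have st : structured V (fun t : 'I_#|Aset V y| => y (enum_val t)) e f.
  split => // t; split; first exact: unit_neq0 (uy _).
  have := enum_valP t; rewrite inE ay => lt.
  by rewrite /y lt.
have cf : forall j, cnt f j = cnt (modo D0 k) j.
  move=> j; rewrite /cnt /f.
  rewrite -(sum_enum_val (Aset V y) (fun i => (modo D0 N i == j : nat))).
  rewrite (eq_bigl (fun i : 'I_N => (i < k)%N)); last by move=> i; rewrite inE ay.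
  rewrite (big_ord_narrow kN); apply: eq_bigr => i _.
  by rewrite /modo -!val_eqE.
have bal : balanced f by move=> a b; rewrite !cf; exact: modo_bal.
have ach := core_ach D0 st bal.
have cA : #|Aset V y| = k by rewrite -cy.
have HQ : Q #|Aset V y| D = Q k D by rewrite cA.
have HK : (#|Aset V y| * #|Aset V y| = k * k)%N by rewrite cA.
exists y; split => //.
rewrite Sy; lia.
Qed.

Lemma CL (x : 'I_N -> vec) (v : 'I_D -> vec) (f : 'I_#|Aset V x| -> 'I_D) :
  in_MN x -> onb_of V v -> (forall t, (x (enum_val t) <= v (f t))%MS) ->
  forall j, #|[set i : 'I_N | `[< antip (x i) (v j) >] ]| = cnt f j.
Proof.
move=> ux ov hf j.
have uv : forall j, dot (v j) (v j) = 1 by move=> j'; rewrite ov.1 eqxx.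
have e1 : forall t, (f t == j) = `[< antip (x (enum_val t)) (v j) >].
  move=> t; apply/eqP/asboolP => [ftj|ap].
    by apply: unit_antip (ux _) (uv j) _; rewrite -ftj.
  case: (eqVneq (f t) j) => // ne; exfalso.
  have [a ea] := sub_rVP (hf t).
  have d0 : dot (x (enum_val t)) (v j) = 0 by rewrite ea dotZl ov.1 (negbTE ne) mulr0.
  case: ap => ea'; move: d0; rewrite ea' ?dotNl uv => /eqP; rewrite ?oppr_eq0 oner_eq0 //.
rewrite card_set_sum /cnt.
have -> : (\sum_(t < #|Aset V x|) (f t == j : nat) =
           \sum_(t < #|Aset V x|) (fun i => (`[< antip (x i) (v j) >] : nat)) (enum_val t))%N.
  by apply: eq_bigr => t _; rewrite e1.
rewrite -(sum_enum_val (Aset V x) (fun i => (`[< antip (x i) (v j) >] : nat))).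
rewrite [RHS]big_mkcond /=; apply: eq_bigr => i _; rewrite inE.
case A: (ina V x i) => //.
rewrite asboolF // => ap; move/negbT: A; rewrite /ina => /negP; apply.
exact: submx_trans (antip_sub ap) (onb_sub j ov).
Qed.

Lemma main_pos k (x : 'I_N -> vec) : (k <= N)%N -> (D * N <= k * D.+1)%N -> in_MNkV V k x ->
  (maximizes (in_MNkV V k) x <->
   (forall i, ~~ (x i <= V)%MS -> antip (x i) p) /\
   exists v : 'I_D -> vec,
     [/\ onb_of V v,
         (forall i, (x i <= V)%MS -> exists j, antip (x i) (v j)) &
         forall j : 'I_D,
           #|[set i : 'I_N | `[< antip (x i) (v j) >] ]| = ceil_div k D \/
           #|[set i : 'I_N | `[< antip (x i) (v j) >] ]| = (k %/ D)%N]).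
Proof.
move=> kN hDN cx; have [ux cxk] := cx.
have cA : #|Aset V x| = k by [].
have HQ : Q #|Aset V x| D = Q k D by rewrite cA.
have HK : (#|Aset V x| * #|Aset V x| = k * k)%N by rewrite cA.
pose w := fun t : 'I_#|Aset V x| => x (enum_val t).
have gw : good V w := good_A ux.
have cb := core_bound rV D0 gw.
split.
- case=> _ mx.
  have [y [cy Sy]] := witness kN.
  have le := mx y cy; rewrite Einf_le in le.
  have ki := KI rV hpV hpp D0 cx hDN kN.
  have m10 : m1 V p x = 0%N by lia.
  have hnoB := noB_of_m1 m10.
  have Sx := S_noB rV hpV hpp cx hnoB.
  have eqA : (S w + Q #|Aset V x| D = #|Aset V x| * #|Aset V x|)%N by rewrite /w; lia.
  have [v [f [st bal]]] := core_eq rV D0 gw eqA.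
  split.
    move=> i ni; apply: (zp0_antip hpp (ux i)).
    by have := hnoB i; rewrite /u1 /ina ni /= /inb negbK => /eqP.
  exists v; split.
  + exact: st.1.
  + move=> i xi; have iA : i \in Aset V x by rewrite inE.
    pose t := enum_rank_in iA i.
    have et : enum_val t = i := enum_rankK_in iA iA.
    exists (f t); apply: unit_antip (ux i) _ _; first by rewrite st.1.1 eqxx.
    by rewrite -{1}et; exact: (proj2 (st.2 t)).
  + move=> j; rewrite (CL ux st.1 (fun t => proj2 (st.2 t))).
    have [hc hs] := bal_char D0 bal (sum_cnt f).
    have e1 : (#|Aset V x| %/ D = k %/ D)%N by rewrite cA.
    have e2 : (#|Aset V x| %% D = k %% D)%N by rewrite cA.
    rewrite e1 e2 in hc hs.
    case: (hc j) => E; first by right.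
    left; rewrite E ceil_gt //.
    rewrite -hs (bigD1 j) //= E eqxx; lia.
- case=> Hout [v [ov Hin Hcnt]].
  split => // y cy; rewrite Einf_le.
  have hnoB : forall i, ~~ u1 V p x i.
    move=> i; rewrite /u1; case A: (ina V x i) => //=.
    by rewrite /inb (antip_zp hpp (Hout i (negbT A))) eqxx.
  have Sx := S_noB rV hpV hpp cx hnoB.
  have : forall t : 'I_#|Aset V x|, exists j, antip (x (enum_val t)) (v j).
    by move=> t; apply: Hin; have := enum_valP t; rewrite inE.
  case/fin_all_exists => f hf.
  have st : structured V w v f.
    by split => // t; split; [exact: unit_neq0 (ux _)|exact: antip_sub (hf t)].
  have cf := CL ux ov (fun t => antip_sub (hf t)).
  have bal : balanced f.
    move=> a b; rewrite -!cf; have := ceil_bounds k D0.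
    by case: (Hcnt a) => ->; case: (Hcnt b) => ->; lia.
  have ach := core_ach D0 st bal.
  have ki := KI rV hpV hpp D0 cy hDN kN.
  rewrite /w in ach; lia.
Qed.

End Main.

End M_B4.
Import M_B4.

Module M_C1.
Set Implicit Arguments. Unset Strict Implicit. Unset Printing Implicit Defensive.
Local Open Scope ring_scope.

Lemma part_b_zero (R : realType) (N : nat) (V : 'M[R]_(0.+1)) (p : 'rV[R]_(0.+1)) (k : nat) :
  \rank V = 0%N ->
  (forall z : 'rV[R]_(0.+1),
        (on_sphere z /\ forall u : 'rV[R]_(0.+1), (u <= V)%MS -> dot u z = 0)
        <-> (z = p \/ z = - p)) ->
  forall x : 'I_N -> 'rV[R]_(0.+1),
       in_MNkV V k x ->
       (maximizes (in_MNkV V k) x <->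
        (forall i, ~~ (x i <= V)%MS -> antip (x i) p) /\
        exists v : 'I_0 -> 'rV[R]_(0.+1),
          [/\ onb_of V v,
              (forall i, (x i <= V)%MS -> exists j, antip (x i) (v j)) &
              forall j : 'I_0,
                #|[set i : 'I_N | `[< antip (x i) (v j) >] ]| = ceil_div k 0 \/
                #|[set i : 'I_N | `[< antip (x i) (v j) >] ]| = (k %/ 0)%N]).
Proof.
move=> rV hp x cx; have [ux _] := cx.
have V0 : V = 0 by apply/eqP; rewrite -mxrank_eq0 rV.
have hpp : dot p p = 1 by have [[]] := (hp p).2 (or_introl erefl).
have all_p : forall z, on_sphere z -> antip z p.
  move=> z uz; apply: (hp z).1; split => // u; rewrite V0 submx0 => /eqP ->; exact: dot0l.
have notV : forall i, ~~ (x i <= V)%MS.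
  move=> i; rewrite V0 submx0; exact: unit_neq0 (ux i).
split.
  case=> _ _; split; first by move=> i _; exact: all_p.
  exists (fun _ => 0); split.
  - by apply: onb_eq => //; case.
  - by move=> i xi; move: (notV i); rewrite xi.
  - by case.
move=> _; split => // y [uy _]; rewrite Einf_le.
have -> : S y = 0%N.
  rewrite /S big1 // => i _; rewrite /deg big1 // => j _.
  apply/adjn0.
  case: (all_p _ (uy i)) => ->; case: (all_p _ (uy j)) => ->;
    rewrite ?dotNl ?dotNr ?opprK hpp ?oppr_eq0 oner_eq0 //.
by [].
Qed.

End M_C1.
Import M_C1.

Unset Implicit Arguments.
Import Order.TTheory GRing.Theory Num.Theory.
Local Open Scope ring_scope.

Theorem theorem2p1 (R : realType) (D N : nat) :
  (* (a) *)
  (forall x : 'I_N -> 'rV[R]_(D.+1),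
     maximizes (@in_MN R D.+1 N) x <->
     exists (v : 'I_(D.+1) -> 'rV[R]_(D.+1)) (y : 'I_N -> 'rV[R]_(D.+1)),
       [/\ onb_of 1%:M v, in_MN y, dirac_sum x = dirac_sum y &
           forall (i : 'I_N) (j : 'I_(D.+1)),
             (i %% D.+1 = j)%N -> antip (y i) (v j)])
  /\
  (* (b) *)
  (forall (V : 'M[R]_(D.+1)) (p : 'rV[R]_(D.+1)) (k : nat),
     \rank V = D ->
     (forall z : 'rV[R]_(D.+1),
        (on_sphere z /\ forall u : 'rV[R]_(D.+1), (u <= V)%MS -> dot u z = 0)
        <-> (z = p \/ z = - p)) ->
     (k <= N)%N -> (D * N <= k * D.+1)%N ->
     forall x : 'I_N -> 'rV[R]_(D.+1),
       in_MNkV V k x ->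
       (maximizes (in_MNkV V k) x <->
        (forall i, ~~ (x i <= V)%MS -> antip (x i) p) /\
        exists v : 'I_D -> 'rV[R]_(D.+1),
          [/\ onb_of V v,
              (forall i, (x i <= V)%MS -> exists j, antip (x i) (v j)) &
              forall j : 'I_D,
                #|[set i : 'I_N | `[< antip (x i) (v j) >] ]| = ceil_div k D \/
                #|[set i : 'I_N | `[< antip (x i) (v j) >] ]| = (k %/ D)%N])).
Proof.
split; first exact: part_a.
case: D => [|D] V p k rV hp kN hDN x cx.
  exact: part_b_zero rV hp x cx.
have [[hpp hpV]] := (hp p).2 (or_introl erefl).
exact (main_pos rV hpV hpp (ltn0Sn D) kN hDN cx).
Qed.
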